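(* For all integers $n\ge 2$, $0\le r\le n$ and $0\le k\le n-2$, $$N_k^{n,r}=\frac{2(k+1)}{n-k-1}\sum_{i}\binom{k}{i}\binom{n-k+i-1}{r}\binom{n-i-1}{n-r},$$ where the sum runs over all integers $i$ with $0\le i\le k$.
   Context: A lattice path from $(0,0)$ to $(r,n-r)$ (with integers $n\ge 1$, $0\le r\le n$) is a sequence of lattice points $v_0=(0,0),v_1,\dots,v_n=(r,n-r)$ with each step $v_i-v_{i-1}\in\{(1,0),(0,1)\}$ (an E step or an N step); its vertex set is $\{v_0,\dots,v_n\}$. For $k\ge 0$, $N_k^{n,r}$ denotes the number of ordered pairs $(P,Q)$ of lattice paths from $(0,0)$ to $(r,n-r)$ such that the intersection of their vertex sets, with the two points $(0,0)$ and $(r,n-r)$ removed, has exactly $k$ elements. Binomial coefficients $\binom{a}{b}$ with $a\ge 0$ are $0$ if $b<0$ or $b>a$. *)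

(* Defs.v *)
From mathcomp Require Import all_boot all_order all_algebra.
Set Implicit Arguments. Unset Strict Implicit. Unset Printing Implicit Defensive.

(* A lattice path with n steps is encoded by its step sequence:
   true = E step (1,0), false = N step (0,1). *)
Definition vertex (n : nat) (p : n.-tuple bool) (i : nat) : nat * nat :=
  (count id (take i p), count negb (take i p)).

Definition verts (n : nat) (p : n.-tuple bool) : seq (nat * nat) :=
  [seq vertex p i | i <- iota 0 n.+1].

Definition is_path (n r : nat) (p : n.-tuple bool) : bool :=
  last (0, 0) (verts p) == (r, n - r).

Definition common_inner (n r : nat) (p q : n.-tuple bool) : nat :=
  size [seq v <- undup (verts p) |
         [&& v \in verts q, v != (0, 0) & v != (r, n - r)]].

Definition Nk (n r k : nat) : nat :=
  #|[set pq : n.-tuple bool * n.-tuple bool |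
      [&& is_path r pq.1, is_path r pq.2 & common_inner r pq.1 pq.2 == k]]|.

(* Main.v *)
Require Import Defs.
From mathcomp Require Import all_boot all_order all_algebra.
From mathcomp Require Import zify ring.
Set Implicit Arguments. Unset Strict Implicit. Unset Printing Implicit Defensive.


Definition hrc n (px : n.-tuple bool * bool) : n.+1.-tuple bool := [tuple of rcons px.1 px.2].
Definition grc n (t : n.+1.-tuple bool) : n.-tuple bool * bool :=
  (belast_tuple (thead t) (behead_tuple t), last (thead t) (behead t)).

Lemma hrcK n : cancel (@hrc n) (@grc n).
Proof.
case=> [[s sP] x]; rewrite /hrc /grc /=; congr pair.
  apply: val_inj => /=. 
  case: s sP => [|y s] sP /=; first by [].
  by rewrite /thead (tnth_nth y) /= belast_rcons.
case: s sP => [|y s] sP /=; first by [].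
by rewrite /thead (tnth_nth y) /= last_rcons.
Qed.

Lemma grcK n : cancel (@grc n) (@hrc n).
Proof.
move=> t; apply: val_inj => /=.
rewrite -lastI; case: t => [[|y s] sP] //=.
Qed.

Lemma sum_tuple_rcons n (F : seq bool -> nat) :
  \sum_(t : n.+1.-tuple bool) F t =
  \sum_(t : n.-tuple bool) (F (rcons t true) + F (rcons t false)).
Proof.
rewrite (reindex (@hrc n)); last by exists (@grc n) => x _; [exact: hrcK | exact: grcK].
rewrite -(pair_bigA _ (fun (t : n.-tuple bool) (x : bool) => F (rcons t x))) /=.
by apply: eq_bigr => t _; rewrite big_bool.
Qed.


Definition cnt (p : seq bool) i := count id (take i p).
Definition zc n (p q : seq bool) := count (fun i => cnt p i == cnt q i) (iota 1 n).
Definition ind n a b z (p q : seq bool) : nat :=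
  (count id p == a) && (count id q == b) && (z <= zc n p q).
Definition cN n a b z := \sum_(p : n.-tuple bool) \sum_(q : n.-tuple bool) ind n a b z p q.

Lemma count_rcons1 (p : seq bool) x : count id (rcons p x) = count id p + x.
Proof. by rewrite -cats1 count_cat /= addn0. Qed.

Lemma zc_rcons n (p q : seq bool) x y : size p = n -> size q = n ->
  zc n.+1 (rcons p x) (rcons q y) = zc n p q + (count id p + x == count id q + y).
Proof.
move=> sp sq; rewrite /zc -[n.+1]addn1 iotaD count_cat /= addn0 add1n.
congr addn.
  apply: eq_in_count => i; rewrite mem_iota => /andP[_ hi].
  rewrite /cnt -!cats1 !takel_cat //; lia.
rewrite /cnt !take_oversize ?size_rcons ?sp ?sq // !count_rcons1.
by [].
Qed.

Lemma key_eq (c d x y a b z w : nat) : x <= 1 -> y <= 1 ->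
  ((c + x == a) && (d + y == b) && (z <= w + (c + x == d + y))) =
  ((x <= a) && (y <= b) && (c == a - x) && (d == b - y) &&
     ((if a == b then z.-1 else z) <= w)).
Proof.
move=> hx hy.
case: (boolP (c + x == a)) => /eqP H1; case: (boolP (d + y == b)) => /eqP H2 /=.
- subst a b. have -> : (c == c + x - x) by apply/eqP; lia.
  have -> : (d == d + y - y) by apply/eqP; lia.
  rewrite leq_addl leq_addl /=.
  case: (_ == _) => /=; last by rewrite addn0.
  by case: z => [|z] //=; rewrite addn1 ltnS.
all: apply/esym/negbTE/negP => /andP[/andP[/andP[/andP[hxa hyb] /eqP hc] /eqP hd] _]; lia.
Qed.

Lemma ind_rcons n a b z (p q : n.-tuple bool) (x y : bool) :
 ind n.+1 a b z (rcons p x) (rcons q y) =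
 if (x <= a) && (y <= b) then ind n (a-x) (b-y) (if a==b then z.-1 else z) p q else 0.
Proof.
rewrite /ind !count_rcons1 zc_rcons ?size_tuple // key_eq; [|by case: x|by case: y].
by case: (x <= a); case: (y <= b).
Qed.

Lemma cN_rec n a b z : cN n.+1 a b z =
  \sum_(x : bool) \sum_(y : bool)
    (if (x <= a) && (y <= b) then cN n (a - x) (b - y) (if a == b then z.-1 else z) else 0).
Proof.
transitivity (\sum_(p : n.-tuple bool) \sum_(q : n.-tuple bool)
  (ind n.+1 a b z (rcons p true) (rcons q true) + ind n.+1 a b z (rcons p true) (rcons q false)
  + (ind n.+1 a b z (rcons p false) (rcons q true) + ind n.+1 a b z (rcons p false) (rcons q false)))).
  rewrite /cN (sum_tuple_rcons n (fun s => \sum_(q : n.+1.-tuple bool) ind n.+1 a b z s q)).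
  apply: eq_bigr => p _.
  rewrite (sum_tuple_rcons n (fun s => ind n.+1 a b z (rcons p true) s)).
  rewrite (sum_tuple_rcons n (fun s => ind n.+1 a b z (rcons p false) s)).
  by rewrite -big_split.
rewrite big_bool /= !big_bool /=.
under eq_bigr => p _ do under eq_bigr => q _ do rewrite !ind_rcons /=.
rewrite !subn0.
case: (0 < a); case: (0 < b); rewrite /= /cN;
  under eq_bigr => p _ do under eq_bigr => q _ do rewrite ?add0n;
  under eq_bigr => p _ do rewrite ?big_split /=;
  by rewrite ?big_split.
Qed.


Definition F n a b z := \sum_(i < z.+1) 'C(z,i) * 'C(n - z + i, a) * 'C(n - i, n - b).
Definition Fs n a b z := if b <= a then F n a b z else F n b a z.

Lemma pasc m k : 0 < k -> 'C(m.+1, k) = 'C(m, k) + 'C(m, k - 1).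
Proof. by case: k => // k _; rewrite binS subn1 /= addnC. Qed.

Lemma pascq n i b : 0 < b -> b <= n -> i <= n ->
  'C(n.+1 - i, n.+1 - b) = 'C(n - i, n - b) + 'C(n - i, n - (b - 1)).
Proof.
move=> hb hbn hi.
have -> : n.+1 - i = (n - i).+1 by lia.
have -> : n.+1 - b = (n - b).+1 by lia.
have -> : n - (b - 1) = (n - b).+1 by lia.
by rewrite binS addnC.
Qed.

Lemma pascq0 n i : i <= n -> 'C(n.+1 - i, n.+1 - 0) = 'C(n - i, n - 0).
Proof.
move=> hi; rewrite !subn0; case: i hi => [|i] hi; first by rewrite !subn0 !binn.
by rewrite !bin_small //; lia.
Qed.

Lemma F_zero_big n a b z : n < a -> z <= n -> F n a b z = 0.
Proof.
move=> ha hz; rewrite /F big1 // => i _.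
by rewrite (bin_small (n := n - z + i)) ?muln0 ?mul0n //; have := ltn_ord i; lia.
Qed.

Lemma F00 n z : z <= n -> F n 0 0 z = 1.
Proof.
move=> hz; rewrite /F big_ord_recl /= bin0 !subn0 binn bin0 /= big1 // => i _.
by rewrite /bump /= (bin_small (n := n - _)) ?muln0 //; have := ltn_ord i; lia.
Qed.

Lemma Fdiag_full n z : z <= n -> F n n n z = 1.
Proof.
move=> hz; rewrite /F big_ord_recr /= binn subnK // binn subnn bin0 big1 // => i _.
by rewrite (bin_small (n := n - z + i)) ?muln0 ?mul0n //; have := ltn_ord i; lia.
Qed.

Lemma F_top n a b : b < a -> F n.+1 a b n.+1 = 0.
Proof.
move=> hab; rewrite /F big1 // => i _; have hi := ltn_ord i.
case: (ltnP (n.+1 - n.+1 + i) a) => h; first by rewrite (bin_small h) muln0 mul0n.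
by rewrite (bin_small (n := n.+1 - i)) ?muln0 //; lia.
Qed.

Lemma step_neq0 n a z : 0 < a -> z <= n ->
  F n.+1 a 0 z = F n (a - 1) 0 z + F n a 0 z.
Proof.
move=> ha hz; rewrite /F -big_split; apply: eq_bigr => i _ /=.
have hi : i <= z by rewrite -ltnS ltn_ord.
have -> : n.+1 - z + i = (n - z + i).+1 by lia.
rewrite pasc // pascq0; last by lia.
all: try ring.
Qed.

Lemma step_neq n a b z : 0 < b -> b < a -> a <= n.+1 -> z <= n ->
  F n.+1 a b z = F n (a - 1) (b - 1) z + F n (a - 1) b z + (F n a (b - 1) z + F n a b z).
Proof.
move=> hb hab ha hz; rewrite /F -!big_split; apply: eq_bigr => i _ /=.
have hi : i <= z by rewrite -ltnS ltn_ord.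
have -> : n.+1 - z + i = (n - z + i).+1 by lia.
rewrite pasc ?pascq //; try lia.
all: try ring.
Qed.

Lemma split_bin w (g : nat -> nat) :
  \sum_(i < w.+2) 'C(w.+1, i) * g i = \sum_(i < w.+1) 'C(w, i) * (g i + g i.+1).
Proof.
rewrite big_ord_recl /= bin0 mul1n.
under eq_bigr => i _ do rewrite /bump /= binS mulnDl.
rewrite big_split /=.
under [in RHS]eq_bigr => i _ do rewrite mulnDr.
rewrite big_split /= addnA; congr addn.
rewrite [in RHS]big_ord_recl /= bin0 mul1n; congr addn.
rewrite [in LHS]big_ord_recr /= bin_small // mul0n addn0.
by apply: eq_bigr => i _.
Qed.

Lemma step_diag n a z : 0 < a -> a <= n -> z <= n.+1 ->
  F n.+1 a a z = F n (a - 1) (a - 1) z.-1 + F n a (a - 1) z.-1 +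
                 (F n a (a - 1) z.-1 + F n a a z.-1).
Proof.
move=> ha han hz; case: z hz => [|z] hz /=.
  rewrite /F !big_ord1 /= !bin0 !mul1n !subn0.
  rewrite !addn0 pasc //.
  have := @pascq n 0 a ha han (leq0n n); rewrite !subn0 => ->.
  have E1 : 'C(n, n - a) = 'C(n, a) by rewrite bin_sub.
  have E2 : 'C(n, n - (a - 1)) = 'C(n, a - 1) by rewrite bin_sub //; lia.
  rewrite E1 E2; ring.
rewrite /F.
under eq_bigr => i _ do rewrite -mulnA.
rewrite (split_bin z (fun i => 'C(n.+1 - z.+1 + i, a) * 'C(n.+1 - i, n.+1 - a))) -!big_split; apply: eq_bigr => i _ /=.
have hi : i <= z by rewrite -ltnS ltn_ord.
have -> : n.+1 - z.+1 + i = n - z + i by lia.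
have -> : n.+1 - z.+1 + i.+1 = (n - z + i).+1 by lia.
have -> : n.+1 - i.+1 = n - i by lia.
have -> : n.+1 - a = n - (a - 1) by lia.
rewrite pasc //.
have -> : n.+1 - i = (n - i).+1 by lia.
have -> : n - (a - 1) = (n - a).+1 by lia.
rewrite binS; ring.
Qed.


Lemma zc_sym n p q : zc n p q = zc n q p.
Proof. by apply: eq_count => i; rewrite eq_sym. Qed.

Lemma cN_sym n a b z : cN n a b z = cN n b a z.
Proof.
rewrite /cN exchange_big; apply: eq_bigr => q _; apply: eq_bigr => p _.
by rewrite /ind zc_sym (andbC (count id p == a)).
Qed.

Lemma cN_big n a b z : n < z -> cN n a b z = 0.
Proof.
move=> h; rewrite /cN big1 // => p _; rewrite big1 // => q _.
rewrite /ind; have : zc n p q <= n by rewrite /zc (leq_trans (count_size _ _)) ?size_iota.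
move=> hz; have -> : (z <= zc n p q) = false by apply/negbTE; rewrite -ltnNge; lia.
by rewrite andbF.
Qed.

Lemma cN_cnt n a b z : n < a -> cN n a b z = 0.
Proof.
move=> h; rewrite /cN big1 // => p _; rewrite big1 // => q _.
rewrite /ind; have : count id p <= n by rewrite -{2}(size_tuple p) count_size.
move=> hz; have -> : (count id p == a) = false by apply/negbTE/eqP; lia.
by [].
Qed.

Lemma cN0 a b z : cN 0 a b z = ((a == 0) && (b == 0) && (z == 0)).
Proof.
rewrite /cN (big_pred1 [tuple]) => [|t]; last by apply/esym/eqP; apply: tuple0.
rewrite (big_pred1 [tuple]) => [|t]; last by apply/esym/eqP; apply: tuple0.
by rewrite /ind /zc /= leqn0 !(eq_sym 0).
Qed.

Lemma Fs_sym n a b z : Fs n a b z = Fs n b a z.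
Proof.
rewrite /Fs; case: (ltngtP a b) => h; rewrite ?h //; try (by rewrite leqNgt h /= ltnW).
Qed.

Theorem cN_closed n : forall a b z, z <= n -> cN n a b z = Fs n a b z.
Proof.
elim: n => [|n IH] a b z hz.
  have -> : z = 0 by lia.
  rewrite cN0 /Fs /F; case: a => [|a]; case: b => [|b]; rewrite /= ?big_ord1 /= ?bin0 ?muln0 ?mul0n //.
  by case: ifP.
wlog hba : a b / b <= a.
  move=> W; case: (leqP b a) => h; first exact: W.
  by rewrite cN_sym Fs_sym W // ltnW.
rewrite /Fs hba.
case: (leqP a n.+1) => han; last first.
  by rewrite cN_cnt // F_zero_big.
rewrite cN_rec big_bool /= !big_bool /= !subn0.
case: (eqVneq a b) => [eab|nab].
  subst b.
  case: (posnP a) => [a0|apos].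
    subst a; rewrite /= !add0n IH; last by lia.
    by rewrite /Fs /= !F00 //; lia.
  rewrite /= !subn1 /=.
  case: (eqVneq a n.+1) => [an|an].
    subst a; rewrite /= !(@cN_cnt n n.+1) // ?add0n ?addn0.
    rewrite (cN_sym n n n.+1) (@cN_cnt n n.+1) // addn0 IH; last by lia.
    by rewrite /Fs leqnn !Fdiag_full //; lia.
  have han' : a <= n by lia.
  rewrite !IH; try lia.
  rewrite /Fs leqnn (leq_pred a) leqNgt ltn_predL apos /=.
  by rewrite leqnn step_diag // !subn1.
have hlt : b < a by rewrite ltn_neqAle eq_sym nab hba.
have apos : 0 < a by lia.
rewrite apos /=.
case: (leqP z n) => hzn; last first.
  have -> : z = n.+1 by lia.
  by rewrite !cN_big // !if_same F_top.
case: (posnP b) => [b0|bpos].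
  subst b; rewrite /= add0n !IH // /Fs !leq0n step_neq0 //.
rewrite /= !IH // /Fs.
have h1 : b - 1 <= a - 1 by lia.
have h2 : b <= a - 1 by lia.
have h3 : b - 1 <= a by lia.
by rewrite h1 h2 h3 hba step_neq.
Qed.


Definition Tp n r k i := 'C(k, i) * 'C(n - k + i - 1, r) * 'C(n - i - 1, n - r).
Definition Vp n r k i := if i is j.+1 then Tp n r k j else 0.

Lemma core (m e i d c A B X Y : nat) :
  (i + d) * (A + B) = (m + i) * B -> (m + e) * X = d * Y ->
  m * c * (A + B) * Y = m * c * (A * Y + (A + B) * X) + e * c * (A + B) * X + i * c * A * Y.
Proof.
move=> H1 H2.
transitivity (m * c * A * Y + (m + e) * X * ((A + B) * c) + i * c * A * Y); last by ring.
rewrite H2.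
transitivity (m * c * A * Y + c * Y * (d * (A + B) + i * A)); last by ring.
have -> : d * (A + B) + i * A = m * B by nia.
ring.
Qed.

Lemma term n r k (i : nat) : 0 < r -> r <= n -> k.+2 <= n -> i <= k.+1 ->
  (n - k - 1) * ('C(k.+1, i) * 'C(n - k.+1 + i, r) * 'C(n - i, n - r)) =
  (n - k - 1) * ('C(k.+1, i) * ('C(n - k.+2 + i, r) * 'C(n - i, n - r)
                 + 'C(n - k.+2 + i.+1, r) * 'C(n - i.+1, n - r)))
  + (k + 1) * Tp n r k i + (k + 1) * Vp n r k i.
Proof.
move=> hr hrn hk hi.
have [m em] : exists m, m = n - k - 1 by eexists.
have [P eP] : exists P, P = m + i by eexists.
rewrite -em.
have e1 : n - k.+1 + i = P by lia.
have e2 : n - k.+2 + i = P.-1 by lia.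
have e3 : n - k.+2 + i.+1 = P by lia.
have e4 : n - k + i - 1 = P by lia.
have e5 : n - i.+1 = n - i - 1 by lia.
rewrite e1 e2 e3 e5 /Tp /Vp e4.
have hP : 0 < P by lia.
have pa : 'C(P, r) = 'C(P.-1, r) + 'C(P.-1, r - 1).
  by rewrite -{1}(prednK hP) pasc.
case: (leqP i r) => hir; last first.
  rewrite !(bin_small (n := n - i)); try lia.
  rewrite !(bin_small (n := n - i - 1)); try lia.
  case: i hi hir eP e1 e2 e3 e4 e5 pa => [|j] hi hir //= eP e1 e2 e3 e4 e5 pa.
  rewrite /Tp (bin_small (n := n - j - 1)); try lia.
have H2 : (n - i) * 'C(n - i - 1, n - r) = (r - i) * 'C(n - i, n - r).
  have := mul_bin_down (n - i) (n - r); rewrite -subn1 => ->; congr (_ * _); lia.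
have H1 : r * 'C(P, r) = P * 'C(P.-1, r - 1).
  by rewrite mul_bin_diag subn1 prednK.
have Hc1 : (k + 1) * 'C(k, i) = (k.+1 - i) * 'C(k.+1, i).
  by rewrite addn1 -(mul_bin_down k.+1 i).
have hV : (k + 1) * Vp n r k i = i * 'C(k.+1, i) * 'C(P.-1, r) * 'C(n - i, n - r).
  case: i hi hir eP e1 e2 e3 e4 e5 H2 Hc1 => [|j] hi hir eP e1 e2 e3 e4 e5 H2 Hc1 /=.
    by rewrite muln0.
  have Hc2 : (k + 1) * 'C(k, j) = j.+1 * 'C(k.+1, j.+1).
    by rewrite addn1 -(mul_bin_diag k.+1 j).
  have e6 : n - k + j - 1 = P.-1 by lia.
  have e7 : n - j - 1 = n - j.+1 by lia.
  by rewrite /Tp e6 e7 !mulnA Hc2.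
rewrite hV pa.
transitivity (m * 'C(k.+1, i) * ('C(P.-1, r) + 'C(P.-1, r - 1)) * 'C(n - i, n - r)); first by ring.
rewrite (@core m (k.+1 - i) i (r - i) _ _ _ ('C(n - i - 1, n - r))).
- rewrite -Hc1; ring.
- have -> : i + (r - i) = r by lia.
  by rewrite -eP -pa.
- rewrite -H2; congr (_ * _); lia.
Qed.

Lemma alg n r k : 0 < r -> r <= n -> k.+2 <= n ->
  (n - k - 1) * F n r r k.+1 =
  (n - k - 1) * F n r r k.+2 + 2 * (k + 1) * \sum_(i < k.+1) Tp n r k i.
Proof.
move=> hr hrn hk.
have sT : \sum_(i < k.+2) Tp n r k i = \sum_(i < k.+1) Tp n r k i.
  by rewrite big_ord_recr /= /Tp bin_small // !mul0n addn0.
have sV : \sum_(i < k.+2) Vp n r k i = \sum_(i < k.+1) Tp n r k i.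
  by rewrite big_ord_recl /= add0n.
rewrite /F.
under [in RHS]eq_bigr => i _ do rewrite -mulnA.
rewrite (split_bin k.+1 (fun i => 'C(n - k.+2 + i, r) * 'C(n - i, n - r))) /=.
rewrite !big_distrr /=.
transitivity (\sum_(i < k.+2) ((n - k - 1) * ('C(k.+1, i) * ('C(n - k.+2 + i, r) * 'C(n - i, n - r)
                 + 'C(n - k.+2 + i.+1, r) * 'C(n - i.+1, n - r)))
  + (k + 1) * Tp n r k i + (k + 1) * Vp n r k i)).
  apply: eq_bigr => i _; apply: term => //; by rewrite -ltnS ltn_ord.
rewrite !big_split /= -!big_distrr /= sT sV; ring.
Qed.


Lemma vert_sum n (p : n.-tuple bool) i : i <= n -> (vertex p i).1 + (vertex p i).2 = i.
Proof.
move=> hi; rewrite /vertex /=.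
have := count_predC id (take i p); rewrite size_takel ?size_tuple // => <-.
Qed.

Lemma vert_eq n (p q : n.-tuple bool) i : i <= n ->
  (vertex p i == vertex q i) = (cnt p i == cnt q i).
Proof.
move=> hi; have h1 := vert_sum p hi; have h2 := vert_sum q hi.
move: h1 h2; rewrite /vertex /cnt /= xpair_eqE.
case: eqP => [->|_] //= h1 h2; apply/eqP; lia.
Qed.

Lemma last_iota m n : last m (iota m.+1 n) = m + n.
Proof. by elim: n m => [|n IH] m /=; [rewrite addn0 | rewrite IH addnS]. Qed.

Lemma is_path_iff n r (p : n.-tuple bool) : r <= n -> is_path r p = (count id p == r).
Proof.
move=> hr; rewrite /is_path /verts /= last_map last_iota add0n.
have hs := vert_sum p (leqnn n).
move: hs; rewrite /vertex /= take_oversize ?size_tuple // xpair_eqE => hs.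
case: eqP => [e|ne] /=; last by [].
apply/eqP; lia.
Qed.

Lemma ci n r (p q : n.-tuple bool) : 0 < n -> r <= n ->
  count id p = r -> count id q = r -> common_inner r p q = (zc n p q).-1.
Proof.
move=> hn hr cp cq.
have uq : uniq (verts p).
  rewrite /verts map_inj_in_uniq ?iota_uniq // => i j.
  rewrite !mem_iota !add0n !ltnS => /andP[_ hi] /andP[_ hj] e.
  by rewrite -(vert_sum p hi) -(vert_sum p hj) e.
rewrite /common_inner undup_id // size_filter /verts count_map.
rewrite (@eq_in_count _ _ (fun i => (cnt p i == cnt q i) && ((i != 0) && (i != n)))); last first.
  move=> i; rewrite mem_iota add0n ltnS => /andP[_ hi] /=.
  have hs := vert_sum p hi.
  rewrite -[vertex q 0 :: _]/(verts q).
  congr andb; last congr andb.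
  - apply/mapP/eqP.
      case=> j; rewrite mem_iota add0n ltnS => /andP[_ hj] e.
      have hsq := vert_sum q hj.
      have ij : i = j by rewrite -hs -hsq e.
      by subst j; apply/eqP; rewrite -vert_eq // e.
    move=> e; exists i; first by rewrite mem_iota add0n ltnS.
    by apply/eqP; rewrite vert_eq // e.
  - congr negb; apply/eqP/eqP => e.
      by rewrite -hs e.
    by subst i; rewrite /vertex /= take0.
  - congr negb; apply/eqP/eqP => e.
      by rewrite -hs e /=; lia.
    subst i; rewrite /vertex take_oversize ?size_tuple //.
    have hs2 := vert_sum p (leqnn n); move: hs2; rewrite /vertex take_oversize ?size_tuple //= => hs2.
    rewrite cp; congr pair; lia.
rewrite /zc; case: n hn p q cp cq {uq hr} => [|n] // _ p q cp cq.
have Ei : iota 1 n.+1 = iota 1 n ++ [:: n.+1] by have := iotaD 1 n 1; rewrite addn1 add1n.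
have Ei0 : iota 0 n.+2 = 0 :: (iota 1 n ++ [:: n.+1]) by rewrite -Ei.
rewrite Ei0 Ei !count_cat /=.
rewrite andbF add0n count_cat /= eqxx !andbF !addn0.
have -> : cnt p n.+1 == cnt q n.+1 by rewrite /cnt !take_oversize ?size_tuple // cp cq.
rewrite addn1 /=.
apply: eq_in_count => i; rewrite mem_iota => /andP[h1 h2].
have -> : i != n.+1 by apply/eqP; lia.
have -> : i != 0 by apply/eqP; lia.
by rewrite andbT andbT.
Qed.


Lemma zc_pos n (p q : n.-tuple bool) : 0 < n -> count id p = count id q -> 0 < zc n p q.
Proof.
move=> hn e; rewrite /zc -has_count; apply/hasP; exists n; first by rewrite mem_iota; lia.
by rewrite /cnt !take_oversize ?size_tuple // e.
Qed.

Lemma Nk_sum n r k : 0 < n -> r <= n ->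
  Nk n r k = \sum_(p : n.-tuple bool) \sum_(q : n.-tuple bool)
     ((count id p == r) && (count id q == r) && (zc n p q == k.+1) : nat).
Proof.
move=> hn hr; rewrite /Nk -sum1_card big_mkcond /=.
rewrite (pair_bigA _ (fun (p q : n.-tuple bool) =>
   ((count id p == r) && (count id q == r) && (zc n p q == k.+1) : nat))).
apply: eq_bigr => [[p q]] _.
rewrite inE /= !is_path_iff //.
case: (eqVneq (count id p) r) => cp //=; case: (eqVneq (count id q) r) => cq //=.
rewrite ci //; try exact/eqP.
case E: (zc n p q) => [|z] //=; last first.
have h := @zc_pos n p q hn; rewrite E ltnn in h.
by exfalso; apply: notF; apply: h; rewrite cp cq.
Qed.

Lemma Nk_rel n r k : 2 <= n -> r <= n -> k <= n - 2 ->
  Nk n r k + cN n r r k.+2 = cN n r r k.+1.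
Proof.
move=> hn hr hk; rewrite Nk_sum //; last by lia.
rewrite /cN -big_split; apply: eq_bigr => p _; rewrite -big_split; apply: eq_bigr => q _.
rewrite /ind.
case: (count id p == r); case: (count id q == r) => //=.
rewrite [in RHS]leq_eqVlt eq_sym; case: eqP => [->|_] //=.
by rewrite ltnn.
Qed.

Unset Implicit Arguments.
Import GRing.Theory Num.Theory.
Local Open Scope ring_scope.

Theorem mainTheorem1 (n r k : nat) :
  (2 <= n)%N -> (r <= n)%N -> (k <= n - 2)%N ->
  (Nk n r k)%:R =
    ((2 * (k + 1))%N%:R / (n - k - 1)%N%:R) *
    \sum_(i < k.+1)
       ('C(k, i) * 'C(n - k + i - 1, r) * 'C(n - i - 1, n - r))%N%:R
    :> rat.
Proof.
move=> hn hr hk.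
have Hrel := Nk_rel hn hr hk.
rewrite !cN_closed in Hrel; try lia.
rewrite /Fs leqnn in Hrel.
have Enat : ((n - k - 1) * Nk n r k = 2 * (k + 1) * \sum_(i < k.+1) Tp n r k i)%N.
  case: (posnP r) => [r0|rpos].
    subst r; rewrite !F00 in Hrel; try lia.
    have -> : Nk n 0 k = 0 by lia.
    rewrite big1 ?muln0 // => i _.
    by rewrite /Tp (bin_small (n := n - i - 1)) ?muln0 //; lia.
  have := alg rpos hr (_ : (k.+2 <= n)%N); rewrite -Hrel mulnDr => H; last by lia.
have hm : ((n - k - 1)%N%:R : rat) != 0 by rewrite pnatr_eq0; lia.
have EN : ((n - k - 1) * Nk n r k)%N%:R = ((2 * (k + 1)) * \sum_(i < k.+1) Tp n r k i)%N%:R :> rat.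
  by rewrite Enat.
rewrite natrM natrM natr_sum in EN.
rewrite mulrAC -[X in _ = X * _]/(_ : rat) -[\sum_(i < k.+1) _]/(\sum_(i < k.+1) (Tp n r k i)%:R) -EN.
by rewrite mulrC mulKf.
Qed.
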